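(* Let $a,b$ be positive integers with $\gcd(a,b)=1$. For all $\pi\in\mathcal{D}_{b,-a}(a,b)$, $$\mathrm{word}(\mathrm{G}_{b,a}(\pi))=\mathrm{sw}^+_{b,-a}\circ\mathrm{rev}(\mathrm{word}(\pi)).$$
   Context: Partitions are drawn in English convention in the first quadrant; a partition with at most $a$ parts, each at most $b$, has as frontier a lattice path from $(0,0)$ to $(b,a)$ with unit north (N) and east (E) steps, its diagram consisting of the unit squares above and to the left of the path; $\mathrm{word}(\lambda)\in\{\mathrm{N},\mathrm{E}\}^*$ is the word of this path. $\mathrm{rev}$ reverses a word. The $(b,-a)$-level of a lattice point $(x,y)$ is $by-ax$; a unit square $[x,x+1]\times[y,y+1]$ (any integers $x,y$) has the level of its southeast corner $(x+1,y)$. $\mathcal{D}_{b,-a}(a,b)$ is the set of partitions fitting in the $a\times b$ rectangle whose frontier path visits only lattice points of nonnegative level. The map $\mathrm{G}_{b,a}$: for $\pi\in\mathcal{D}_{b,-a}(a,b)$, its $b$-generators $\beta_1<\beta_2<\cdots<\beta_b$ are the levels of the squares immediately above the $b$ east steps of the frontier path (the square $[x,x+1]\times[y,y+1]$ for an east step from $(x,y)$ to $(x+1,y)$). Let $\Delta^c$ be the finite set of levels of unit squares lying above the line $by=ax$ and below the frontier path of $\pi$. For each $i$ set $g_{b,a}(\beta_i)=|\{\beta_i,\beta_i+1,\ldots,\beta_i+a-1\}\cap\Delta^c|$. Then $\mathrm{G}_{b,a}(\pi)$ is the partition whose $i$-th column has length $g_{b,a}(\beta_i)$ for $1\le i\le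 b$, regarded as fitting in the $a\times b$ rectangle. For a word $w=w_1\cdots w_n$, set $l_0=0$, $l_i=l_{i-1}+b$ if $w_i=\mathrm{N}$, $l_i=l_{i-1}-a$ if $w_i=\mathrm{E}$. $\mathrm{sw}^+_{b,-a}(w)$ is obtained by: for $k=0,-1,-2,\ldots$ and then $k=\ldots,3,2,1$ (all nonpositive values in decreasing order, then all positive values in decreasing order), scan $w$ from left to right and append each $w_i$ ($i\ge1$) with $l_i=k$. *)

(* Defs.v *)
From HB Require Import structures.
From mathcomp Require Import all_boot all_order all_algebra.
Set Implicit Arguments. Unset Strict Implicit. Unset Printing Implicit Defensive.
Import Order.TTheory GRing.Theory Num.Theory.

Inductive step := N | E.

Definition step_eqb (s t : step) : bool :=
  match s, t with N, N | E, E => true | _, _ => false end.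
Lemma step_eqP : Equality.axiom step_eqb.
Proof. by case; case; constructor. Qed.
HB.instance Definition _ := hasDecEq.Build step step_eqP.

(* A partition fitting in the a x b rectangle (at most a parts, each at most
   b) is encoded by the list [c_1; ...; c_b] of its b column lengths
   (columns numbered from left to right, zero columns included):
   a weakly decreasing list of length b with entries <= a. *)
Definition is_box_partition (a b : nat) (c : seq nat) : bool :=
  [&& size c == b, sorted geq c & all (fun x => x <= a) c].

(* word(lambda): the frontier path from (0,0) to (b,a).  Above the i-th east
   step lies column i, of length c_i, so that east step is at height a - c_i.
   word = N^(d_1 - d_0) E N^(d_2 - d_1) E ... N^(d_b - d_(b-1)) E N^(a - d_b),
   with d_0 = 0 and d_i = a - c_i. *)
Definition word (a b : nat) (c : seq nat) : seq step :=
  let d := [seq a - x | x <- c] in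
  flatten [seq rcons (nseq (p.2 - p.1) N) E | p <- zip (0 :: d) d]
  ++ nseq (a - last 0 d) N.

Definition move (p : nat * nat) (s : step) : nat * nat :=
  match s with N => (p.1, p.2.+1) | E => (p.1.+1, p.2) end.
Definition pts (w : seq step) : seq (nat * nat) := (0, 0) :: scanl move (0, 0) w.

Definition level (a b : nat) (p : nat * nat) : int :=
  (Posz (b * p.2) - Posz (a * p.1))%R.

Definition inD (a b : nat) (c : seq nat) : bool :=
  is_box_partition a b c && all (fun p => (0 <= level a b p)%R) (pts (word a b c)).

Definition east_starts (w : seq step) : seq (nat * nat) :=
  [seq ps.1 | ps <- zip (pts w) w & ps.2 == E].

(* Level of the unit square [x,x+1]x[y,y+1]: level of its SE corner (x+1,y). *)
Definition sq_level (a b : nat) (x y : nat) : int := level a b (x.+1, y).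

Definition generators (a b : nat) (c : seq nat) : seq int :=
  sort (fun u v : int => (u <= v)%R)
    [seq sq_level a b p.1 p.2 | p <- east_starts (word a b c)].

(* Delta^c: levels of the unit squares lying above the line b y = a x (i.e.
   whose lowest point, the SE corner, has nonnegative level) and below the
   frontier path.  The squares below the path are those [x,x+1]x[y',y'+1]
   under an east step from (x,y), i.e. y' < y; squares with y' < 0 are never
   above the line (x >= 0), so y' ranges over 0 .. y-1. *)
Definition DeltaC (a b : nat) (c : seq nat) : seq int :=
  [seq l <- flatten [seq [seq sq_level a b p.1 y' | y' <- iota 0 p.2]
                     | p <- east_starts (word a b c)]
  | (0 <= l)%R].

Definition g_ba (a b : nat) (c : seq nat) (beta : int) : nat :=
  count (fun k => k \in DeltaC a b c) [seq beta + (Posz k) | k <- iota 0 a]%R.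

Definition G_ba (a b : nat) (c : seq nat) : seq nat :=
  [seq g_ba a b c beta | beta <- generators a b c].

Definition step_incr (a b : nat) (s : step) : int :=
  match s with N => (Posz b)%R | E => (- (Posz a))%R end.
Definition word_levels (a b : nat) (w : seq step) : seq int :=
  scanl (fun l s => l + step_incr a b s)%R 0%R w.

(* All levels satisfy
   |l_i| <= (a+b) n (n = size w), so k ranges over [-M, M] with M = (a+b) n;
   the omitted values of k contribute nothing. *)
Definition sw_plus (a b : nat) (w : seq step) : seq step :=
  let M := ((a + b) * size w)%N in
  let ks := [seq (- (Posz j))%R | j <- iota 0 M.+1] ++ [seq Posz (M - j) | j <- iota 0 M] in
  let wl := zip w (word_levels a b w) in
  flatten [seq [seq q.1 | q <- wl & q.2 == k] | k <- ks].

(* Main.v *)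
Require Import Defs.
From mathcomp Require Import all_boot all_order all_algebra.
From mathcomp Require Import zify ring.
Import Order.TTheory GRing.Theory Num.Theory.
Set Implicit Arguments. Unset Strict Implicit. Unset Printing Implicit Defensive.

Fixpoint pc (k : nat) (w : seq step) : seq nat :=
  match w with [::] => [::] | N :: w' => pc k.+1 w' | E :: w' => k :: pc k w' end.

Lemma pc_ge k s : all (leq k) (pc k s).
Proof.
elim: s k => [|[] s IH] k //=.
  by apply/allP=> x /(allP (IH k.+1)) /ltnW.
by rewrite leqnn IH.
Qed.

Lemma pc_le k s : all (fun x => x <= k + count_mem N s) (pc k s).
Proof.
elim: s k => [|[] s IH] k //=.
  by apply/allP=> x /(allP (IH k.+1)); rewrite addSnnS.
rewrite leq_addr /=; exact: IH.
Qed.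

Lemma pc_sorted k s : sorted leq (pc k s).
Proof.
elim: s k => [|[] s IH] k //=.
rewrite path_min_sorted //; exact: pc_ge.
Qed.

Lemma size_pc k s : size (pc k s) = count_mem E s.
Proof. by elim: s k => [|[] s IH] k //=; rewrite IH. Qed.

Lemma word_pc a s k : k + count_mem N s = a ->
  flatten [seq rcons (nseq (p.2 - p.1) N) E | p <- zip (k :: pc k s) (pc k s)]
  ++ nseq (a - last k (pc k s)) N = s.
Proof.
elim: s k => [|[] s IH] k /=.
- by move=> <-; rewrite addn0 subnn.
- move=> Ha; rewrite -addSnnS in Ha.
  move: (IH k.+1 Ha) (pc_ge k.+1 s); case: (pc k.+1 s) => [|x P] /= <-.
    by move=> _; have ->: a - k = (a - k.+1).+1 by lia.
  move=> /andP[Hx _]; have ->: x - k = (x - k.+1).+1 by lia.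
  by [].
- rewrite add0n => Ha; rewrite subnn /=; congr (_ :: _); exact: IH.
Qed.

Lemma word_cols a b s : count_mem N s = a ->
  word a b [seq a - x | x <- pc 0 s] = s.
Proof.
move=> Ha; rewrite /word -map_comp.
have ->: [seq (fun x => a - (a - x)) x | x <- pc 0 s] = pc 0 s.
  rewrite -[RHS]map_id; apply/eq_in_map => x /(allP (pc_le 0 s)).
  rewrite add0n Ha /= => H; lia.
exact: word_pc.
Qed.

Lemma cols_box a b s : count_mem N s = a -> count_mem E s = b ->
  is_box_partition a b [seq a - x | x <- pc 0 s].
Proof.
move=> Ha Hb; rewrite /is_box_partition size_map size_pc Hb eqxx /=.
apply/andP; split.
  rewrite sorted_map; apply: (sub_sorted (e := leq)) => [x y H|]; last exact: pc_sorted.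
  rewrite /geq /=; exact: leq_sub2l.
by apply/allP=> x /mapP[y _ ->]; exact: leq_subr.
Qed.

Lemma path_last_ge d0 d : path leq d0 d -> d0 <= last d0 d.
Proof.
elim: d d0 => [|x d IH] d0 //= /andP[H1 H2].
exact: leq_trans H1 (IH _ H2).
Qed.

Lemma count_chunks (P : pred step) d0 d : path leq d0 d ->
  count P (flatten [seq rcons (nseq (p.2 - p.1) N) E | p <- zip (d0 :: d) d])
  = (last d0 d - d0) * P N + size d * P E.
Proof.
elim: d d0 => [|x d IH] d0 /=; first by rewrite subnn.
move=> /andP[H1 H2]; rewrite count_cat IH // -cats1 count_cat count_nseq /=.
have := path_last_ge H2.
case: (P N); case: (P E) => /=; lia.
Qed.

Lemma word_counts a b c : is_box_partition a b c ->
  count_mem N (word a b c) = a /\ count_mem E (word a b c) = b.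
Proof.
case/and3P=> /eqP Hs Hsort Hall.
set d := [seq a - x | x <- c].
have Hp : path leq 0 d.
  rewrite path_min_sorted; last by apply/allP.
  rewrite /d sorted_map; apply: (sub_sorted (e := geq)) Hsort => x y H.
  exact: leq_sub2l.
have Hl : last 0 d <= a.
  have: last 0 d \in 0 :: d by rewrite mem_last.
  by rewrite inE => /orP[/eqP ->//|/mapP[x _ ->]]; exact: leq_subr.
rewrite /word -/d !count_cat !count_chunks // !count_nseq /= size_map Hs.
split; lia.
Qed.

Definition ptsf (p : nat * nat) (w : seq step) := p :: scanl move p w.
Definition PTf p w := zip (ptsf p w) w.

Lemma PTf_cons p s w : PTf p (s :: w) = (p, s) :: PTf (move p s) w.
Proof. by []. Qed.

Lemma unzip2_PTf p w : map snd (PTf p w) = w.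
Proof. by elim: w p => [|s w IH] p //=; rewrite -/(PTf _ _) IH. Qed.

Lemma sum_PTf p w :
  map (fun q => q.1.1 + q.1.2) (PTf p w) = iota (p.1 + p.2) (size w).
Proof.
elim: w p => [|s w IH] p //=; rewrite -/(PTf _ _) IH.
by case: s => /=; rewrite ?addnS ?addSn.
Qed.

Lemma PTf_bounds p w q : q \in PTf p w ->
  [/\ q.1.1 <= p.1 + count_mem E w, q.1.2 <= p.2 + count_mem N w,
      q.2 = N -> q.1.2 < p.2 + count_mem N w &
      q.2 = E -> q.1.1 < p.1 + count_mem E w].
Proof.
elim: w p => [|s w IH] p //; rewrite PTf_cons inE => /orP[/eqP ->|/IH].
  by case: s => /=; split => //; try lia; move=> H; discriminate H.
by case: s => /= [] [H1 H2 H3 H4]; split=> [||/H3|/H4]; lia.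
Qed.

Lemma PTf_move p w q : q \in PTf p w -> move q.1 q.2 \in ptsf p w.
Proof.
elim: w p => [|s w IH] p //; rewrite PTf_cons inE => /orP[/eqP ->|].
  by rewrite /= !inE eqxx orbT.
by move/IH => H; rewrite /ptsf /= inE H orbT.
Qed.

Lemma level_move a b p s :
  level a b (move p s) = (level a b p + step_incr a b s)%R.
Proof.
case: s; case: p => x y; rewrite /level /= ?mulnS ?mulnSr.
  rewrite PoszD; lia.
rewrite PoszD; lia.
Qed.

Fixpoint sl a b (c : int) (w : seq step) : seq int :=
  match w with [::] => [::] | s :: w' => c :: sl a b (c + step_incr a b s)%R w' end.

Lemma PT_levels a b p w :
  [seq (q.2, level a b q.1) | q <- PTf p w] = zip w (sl a b (level a b p) w).
Proof.
elim: w p => [|s w IH] p //=; rewrite -/(PTf _ _) IH level_move //.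
Qed.

Open Scope ring_scope.

Definition tot a b (u : seq step) : int := \sum_(s <- u) step_incr a b s.

Lemma foldl_tot a b c u :
  foldl (fun l s => l + step_incr a b s) c u = c + tot a b u.
Proof.
elim: u c => [|s u IH] c /=; first by rewrite /tot big_nil addr0.
by rewrite IH /tot big_cons addrA.
Qed.

Lemma sl_shift a b c d w : sl a b (c + d) w = [seq x + d | x <- sl a b c w].
Proof.
elim: w c => [|s w IH] c //=; congr (_ :: _).
by rewrite -IH; congr sl; rewrite -!addrA [d + _]addrC.
Qed.

Lemma rev_lv a b c w :
  scanl (fun l s => l + step_incr a b s) c (rev w)
  = rev [seq c + (tot a b w - x) | x <- sl a b 0 w].
Proof.
elim: w => [|s w IH] //=.
rewrite rev_cons -cats1 scanl_cat IH foldl_tot /tot big_rev.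
rewrite -[step_incr a b s]add0r sl_shift add0r -map_comp rev_cons -cats1.
congr (_ ++ _).
  congr rev; apply/eq_map => x /=; rewrite big_cons; ring.
by rewrite /= big_cons subr0; congr [:: _]; ring.
Qed.

Lemma tot_count a b w :
  tot a b w = Posz (b * count_mem N w) - Posz (a * count_mem E w).
Proof.
elim: w => [|s w IH]; first by rewrite /tot big_nil /= !muln0.
rewrite /tot big_cons -/(tot a b w) IH; case: s => /=;
rewrite ?mulnDr ?muln1 ?muln0 ?PoszD; lia.
Qed.

Lemma size_sl a b c w : size (sl a b c w) = size w.
Proof. by elim: w c => [|s w IH] c //=; rewrite IH. Qed.

Lemma zip_map_opp (w : seq step) (l : seq int) :
  zip w [seq - x | x <- l] = [seq (q.1, - q.2) | q <- zip w l].
Proof. by elim: w l => [|s w IH] [|x l] //=; rewrite IH. Qed.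

Lemma wl_eq a b w : tot a b w = 0 ->
  zip (rev w) (word_levels a b (rev w)) = rev [seq (q.1, - q.2) | q <- zip w (sl a b 0 w)].
Proof.
move=> Ht; rewrite /word_levels rev_lv Ht.
rewrite -rev_zip; last by rewrite size_map size_sl.
congr rev; rewrite -zip_map_opp; congr zip; apply/eq_map => x; lia.
Qed.

Close Scope ring_scope.
Open Scope ring_scope.

Definition grp (U : seq (step * int)) (k : int) := [seq q <- U | q.2 == k].

Lemma grp_small U k : uniq (map snd U) -> (size (grp U k) <= 1)%N.
Proof.
move=> Hu; rewrite size_filter.
have ->: count (fun q : step * int => q.2 == k) U = count_mem k (map snd U).
  by rewrite count_map; apply: eq_count => q /=; rewrite eq_sym.
by rewrite count_uniq_mem //; case: (_ \in _).
Qed.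

Lemma pairwise_grps U ks : uniq (map snd U) -> sorted (fun x y : int => y < x) ks ->
  pairwise (fun p q : step * int => q.2 < p.2) (flatten [seq grp U k | k <- ks]).
Proof.
move=> Hu; elim: ks => [|k ks IH] //= Hs.
rewrite pairwise_cat; apply/and3P; split.
- apply/allrelP => p q; rewrite mem_filter => /andP[/eqP Hp _].
  case/flatten_mapP => k' Hk'; rewrite mem_filter => /andP[/eqP Hq _].
  rewrite Hp Hq.
  have Hall: all (fun y : int => y < k) ks.
    by apply: order_path_min Hs => x y z H1 H2; exact: lt_trans H2 H1.
  exact: (allP Hall).
- have := grp_small k Hu; case: (grp U k) => [|x [|y l]] //.
- apply: IH; exact: path_sorted Hs.
Qed.

Definition ksM (M : nat) : seq int :=
  [seq - Posz j | j <- iota 0 M.+1] ++ [seq Posz (M - j) | j <- iota 0 M].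

Lemma flatten_nil (S T : eqType) (f : S -> seq T) s :
  (forall x, x \in s -> f x = [::]) -> flatten [seq f x | x <- s] = [::].
Proof.
elim: s => [|x s IH] //= H; rewrite H ?inE ?eqxx // IH // => y Hy.
by apply: H; rewrite inE Hy orbT.
Qed.

Lemma F_split U M : all (fun q : step * int => q.2 <= 0) U ->
  flatten [seq grp U k | k <- ksM M] =
  flatten [seq grp U k | k <- [seq - Posz j | j <- iota 0 M.+1]].
Proof.
move=> Hall; rewrite /ksM map_cat flatten_cat.
rewrite -[RHS]cats0; congr (_ ++ _).
rewrite -map_comp; apply: flatten_nil => j; rewrite mem_iota => /andP[_ Hj] /=.
rewrite /grp (eq_in_filter (a2 := pred0)) ?filter_pred0 // => q /(allP Hall) /= Hq.
apply/negbTE; apply/eqP => Heq; move: Hq; rewrite Heq; lia.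
Qed.

Lemma ks_sorted M : sorted (fun x y : int => y < x) [seq - Posz j | j <- iota 0 M.+1].
Proof.
rewrite sorted_map; apply: (sub_sorted (e := ltn)); last exact: iota_ltn_sorted.
move=> x y /= H; lia.
Qed.

Lemma F_pairwise U M : uniq (map snd U) -> all (fun q : step * int => q.2 <= 0) U ->
  pairwise (fun p q : step * int => q.2 < p.2) (flatten [seq grp U k | k <- ksM M]).
Proof.
move=> Hu Hall; rewrite F_split //; apply: pairwise_grps => //; exact: ks_sorted.
Qed.

Lemma F_perm U M : uniq (map snd U) ->
  all (fun q : step * int => (- Posz M <= q.2) && (q.2 <= 0)) U ->
  perm_eq (flatten [seq grp U k | k <- ksM M]) U.
Proof.
move=> Hu Hall.
have Hall' : all (fun q : step * int => q.2 <= 0) U.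
  by apply/allP => q /(allP Hall) /andP[].
apply: uniq_perm.
- apply: (pairwise_uniq (r := fun p q : step * int => q.2 < p.2)).
    by move=> q; rewrite ltxx.
  exact: F_pairwise.
- exact: map_uniq Hu.
move=> q; apply/flatten_mapP/idP => [[k _]|Hq]; first by rewrite mem_filter => /andP[].
have /andP[H1 H2] := allP Hall q Hq.
exists q.2; last by rewrite mem_filter eqxx Hq.
rewrite /ksM mem_cat; apply/orP; left; apply/mapP.
move: H1 H2; case: q.2 => [n|n] H1 H2.
  exists 0%N; first by rewrite mem_iota.
  by move: H2; rewrite lez_nat leqn0 => /eqP ->.
exists n.+1; first by rewrite mem_iota /=; move: H1; rewrite NegzE; lia.
by rewrite NegzE.
Qed.

Close Scope ring_scope.
Open Scope ring_scope.

Lemma pc_list (U : seq (step * int)) k :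
  pairwise (fun p q : step * int => q.2 < p.2) U ->
  pc k (map fst U) =
  [seq (k + count (fun q : step * int => (q.1 == N) && (p.2 < q.2)%R) U)%N
    | p <- U & p.1 == E].
Proof.
elim: U k => [|[s l] U IH] k //.
rewrite pairwise_cons => /andP[Hall Hpw].
move: Hall; case: s => /= Hall.
- rewrite IH //; apply/eq_in_map => p; rewrite mem_filter => /andP[_ Hp] /=.
  have := allP Hall p Hp => /= Hlt.
  by rewrite Hlt addSnnS.
- congr (_ :: _).
    rewrite (eq_in_count (a2 := pred0)) ?count_pred0 ?addn0 // => q Hq /=.
    have := allP Hall q Hq => /= Hlt.
    by rewrite ltNge (ltW Hlt) andbF.
  rewrite IH //.
Qed.

Close Scope ring_scope.

Definition esf p w := [seq q.1 | q <- PTf p w & q.2 == E].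
Definition nsf p w := [seq q.1 | q <- PTf p w & q.2 == N].

Lemma esf_E p w : esf p (E :: w) = p :: esf (move p E) w. Proof. by []. Qed.
Lemma esf_N p w : esf p (N :: w) = esf (move p N) w. Proof. by []. Qed.
Lemma nsf_E p w : nsf p (E :: w) = nsf (move p E) w. Proof. by []. Qed.
Lemma nsf_N p w : nsf p (N :: w) = p :: nsf (move p N) w. Proof. by []. Qed.

Lemma geo p0 w X Y :
  (exists p, [/\ p \in esf p0 w, Y < p.2 & X = p.1.+1]) <->
  (exists p, [/\ p \in nsf p0 w, p.2 = Y, p.1 < X & X <= p0.1 + count_mem E w])
  \/ (p0.1 < X <= p0.1 + count_mem E w /\ Y < p0.2).
Proof.
elim: w p0 => [|s w IH] p0.
  split; first by case=> p [].
  by case=> [[p []]|[/andP[H1 H2] _]] //; move: H2; rewrite /= addn0; lia.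
case: s.
- rewrite esf_N nsf_N (IH (move p0 N)) /=.
  split.
  + case=> [[p [H1 H2 H3 H4]]|[H1 H2]].
      by left; exists p; split => //; rewrite inE H1 orbT.
    case: (ltngtP Y p0.2) => HY.
    * by right; split.
    * by lia.
    * by left; exists p0; split => //; rewrite ?inE ?eqxx //; lia.
  + case=> [[p [H1 H2 H3 H4]]|[H1 H2]].
      move: H1; rewrite inE => /orP[/eqP Hp|H1].
        by right; subst p; split => //; lia.
      by left; exists p.
    by right; split => //; lia.
- rewrite esf_E nsf_E /=.
  split.
  + case=> p []; rewrite inE => /orP[/eqP ->|Hp] HY HX.
      by right; split => //; lia.
    have : exists p, [/\ p \in esf (move p0 E) w, Y < p.2 & X = p.1.+1] by exists p.
    move/IH => /= [[q [H1 H2 H3 H4]]|[H1 H2]].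
      by left; exists q; split => //; lia.
    by right; split => //; lia.
  + case=> [[p [H1 H2 H3 H4]]|[H1 H2]].
      have : exists p, [/\ p \in esf (move p0 E) w, Y < p.2 & X = p.1.+1].
        by apply/IH; left; exists p; split => //=; lia.
      by case=> q [Hq ? ?]; exists q; split => //; rewrite inE Hq orbT.
    case: (ltngtP X p0.1.+1) => HX; first by lia.
      have : exists p, [/\ p \in esf (move p0 E) w, Y < p.2 & X = p.1.+1].
        by apply/IH; right; split => //=; lia.
      by case=> q [Hq ? ?]; exists q; split => //; rewrite inE Hq orbT.
    by exists p0; split => //; rewrite inE eqxx.
Qed.

Lemma level_inj_aux a b x1 y1 x2 y2 : 0 < a -> 0 < b -> coprime a b ->
  x1 + y1 < a + b -> y1 <= a -> y2 <= y1 ->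
  b * y1 + a * x2 = b * y2 + a * x1 -> x1 = x2 /\ y1 = y2.
Proof.
move=> Ha Hb Hab Hs Hy Hyy Heq.
have Hx : x2 <= x1.
  have: b * y2 <= b * y1 by rewrite leq_mul2l Hyy orbT.
  move=> H; have: a * x2 <= a * x1 by lia.
  by rewrite leq_mul2l (negbTE (lt0n_neq0 Ha)).
have E1 : b * (y1 - y2) = a * (x1 - x2) by rewrite !mulnBr; lia.
have Hd : a %| y1 - y2.
  by rewrite -(Gauss_dvdr _ Hab) E1 dvdn_mulr.
case: (posnP (y1 - y2)) => H0.
  have: a * (x1 - x2) = a * 0 by rewrite -E1 H0 !muln0.
  move/eqP; rewrite eqn_pmul2l // => /eqP H1; split; lia.
have := dvdn_leq H0 Hd => Hle.
have Hya : y1 - y2 = a by lia.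
have: a * (x1 - x2) = a * b by rewrite -E1 Hya mulnC.
move/eqP; rewrite eqn_pmul2l // => /eqP H1; lia.
Qed.

Lemma level_inj a b p q : 0 < a -> 0 < b -> coprime a b ->
  p.1 + p.2 < a + b -> p.2 <= a -> q.1 + q.2 < a + b -> q.2 <= a ->
  level a b p = level a b q -> p = q.
Proof.
case: p => x1 y1; case: q => x2 y2 /= Ha Hb Hab H1 H2 H3 H4.
rewrite /level /= => Hl.
have Heq : b * y1 + a * x2 = b * y2 + a * x1.
  move: Hl; set u1 := b * y1; set u2 := b * y2; set v1 := a * x1; set v2 := a * x2; lia.
case: (leqP y2 y1) => Hy.
  by case: (level_inj_aux Ha Hb Hab H1 H2 Hy Heq) => -> ->.
case: (level_inj_aux Ha Hb Hab H3 H4 (ltnW Hy) (esym Heq)) => -> ->. by [].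
Qed.

Definition good a b w := [/\ 0 < a, 0 < b, coprime a b, count_mem N w = a &
  count_mem E w = b] /\ all (fun p => 0 <= level a b p)%R (ptsf (0,0) w).

Lemma size_NE w : size w = count_mem N w + count_mem E w.
Proof. by elim: w => [|[] w IH] //=; rewrite IH ?add0n ?add1n ?addSn ?addnS. Qed.

Lemma PTf_fst p w q : q \in PTf p w -> q.1 \in ptsf p w.
Proof.
elim: w p => [|s w IH] p //; rewrite PTf_cons inE => /orP[/eqP ->|].
  by rewrite /= !inE eqxx.
by move/IH => H; rewrite /ptsf /= inE H orbT.
Qed.

Lemma PT_bounds a b w q : good a b w -> q \in PTf (0,0) w ->
  [/\ q.1.1 + q.1.2 < a + b, q.1.1 <= b, q.1.2 <= a,
      q.2 = N -> q.1.2 < a & q.2 = E -> q.1.1 < b].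
Proof.
case=> [[Ha Hb Hab HN HE] _] Hq.
have := PTf_bounds Hq; rewrite /= !add0n HN HE => [[H1 H2 H3 H4]].
split => //.
have: q.1.1 + q.1.2 \in map (fun q => q.1.1 + q.1.2) (PTf (0,0) w) by apply: map_f.
by rewrite sum_PTf mem_iota size_NE HN HE /= add0n addnC.
Qed.

Lemma uniq_pts w : uniq (map fst (PTf (0,0) w)).
Proof.
apply: (map_uniq (f := fun p : nat * nat => p.1 + p.2)).
by rewrite -map_comp sum_PTf iota_uniq.
Qed.

Lemma level_inj_PT a b w : good a b w ->
  {in map fst (PTf (0,0) w) &, injective (level a b)}.
Proof.
move=> Hg p q /mapP[p' Hp' ->] /mapP[q' Hq' ->].
have [[Ha Hb Hab _ _] _] := Hg.
have [P1 _ P3 _ _] := PT_bounds Hg Hp'.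
have [Q1 _ Q3 _ _] := PT_bounds Hg Hq'.
exact: level_inj.
Qed.

Lemma uniq_fst_snd (S T : eqType) (s : seq (S * T)) x y1 y2 :
  uniq (map fst s) -> (x, y1) \in s -> (x, y2) \in s -> y1 = y2.
Proof.
elim: s => [|[u v] s IH] //= /andP[Hn Hu]; rewrite !inE.
case/orP=> [/eqP [Hx1 Hy1]|H1]; case/orP=> [/eqP [Hx2 Hy2]|H2].
- by rewrite Hy1 Hy2.
- by move: Hn; rewrite -Hx1 (map_f fst H2).
- by move: Hn; rewrite -Hx2 (map_f fst H1).
- exact: IH.
Qed.

Lemma NE_distinct a b w p q : good a b w ->
  (p, N) \in PTf (0,0) w -> (q, E) \in PTf (0,0) w -> level a b p != level a b q.
Proof.
move=> Hg Hp Hq; apply/eqP => Hl.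
have Hpq := level_inj_PT Hg (map_f fst Hp) (map_f fst Hq) Hl.
rewrite /= in Hpq; subst q.
by have := uniq_fst_snd (uniq_pts w) Hp Hq.
Qed.

Lemma lev_nonneg a b w q : good a b w -> q \in PTf (0,0) w -> (0 <= level a b q.1)%R.
Proof. by case=> _ Hall /PTf_fst; apply: (allP Hall). Qed.

Lemma lev_le a b w q : good a b w -> q \in PTf (0,0) w ->
  (level a b q.1 <= Posz (b * a))%R.
Proof.
move=> Hg Hq; have [_ _ H3 _ _] := PT_bounds Hg Hq.
rewrite /level; have: b * q.1.2 <= b * a by rewrite leq_mul2l H3 orbT.
set u := b * q.1.2; set v := a * q.1.1; lia.
Qed.

Lemma E_lev_ge a b w p : good a b w -> (p, E) \in PTf (0,0) w ->
  (Posz a <= level a b p)%R.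
Proof.
case=> _ Hall Hp; have := allP Hall _ (PTf_move Hp).
rewrite level_move /=; lia.
Qed.

Lemma snd_nsf p0 w : map snd (nsf p0 w) = iota p0.2 (count_mem N w).
Proof.
elim: w p0 => [|[] w IH] p0 //.
  by rewrite nsf_N /= IH.
by rewrite nsf_E IH.
Qed.

Lemma nsf_mem p w : p \in nsf (0,0) w = ((p, N) \in PTf (0,0) w).
Proof.
apply/mapP/idP => [[q]|H]; last by exists (p, N) => //; rewrite mem_filter H.
by rewrite mem_filter => /andP[/eqP H1 H2] ->; rewrite -H1 -surjective_pairing.
Qed.

Lemma esf_mem p w : p \in esf (0,0) w = ((p, E) \in PTf (0,0) w).
Proof.
apply/mapP/idP => [[q]|H]; last by exists (p, E) => //; rewrite mem_filter H.
by rewrite mem_filter => /andP[/eqP H1 H2] ->; rewrite -H1 -surjective_pairing.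
Qed.

Lemma nsf_inj w p q : p \in nsf (0,0) w -> q \in nsf (0,0) w -> p.2 = q.2 -> p = q.
Proof.
have Hu : uniq (map snd (nsf (0,0) w)) by rewrite snd_nsf iota_uniq.
elim: (nsf (0,0) w) Hu => [|r s IH] //= /andP[Hn Hu]; rewrite !inE.
case/orP=> [/eqP ->|H1]; case/orP=> [/eqP ->|H2] //.
- by move=> Hy; move: Hn; rewrite Hy (map_f snd H2).
- by move=> Hy; move: Hn; rewrite -Hy (map_f snd H1).
- exact: IH.
Qed.

Lemma uniq_nsf w : uniq (nsf (0,0) w).
Proof. by apply: (map_uniq (f := snd)); rewrite snd_nsf iota_uniq. Qed.

Lemma size_nsf w : size (nsf (0,0) w) = count_mem N w.
Proof. by rewrite -(size_map snd) snd_nsf size_iota. Qed.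

Lemma char_DeltaC a b pi w (m : int) : word a b pi = w -> good a b w -> (0 <= m)%R ->
  (m \in DeltaC a b pi <->
   exists p, p \in nsf (0,0) w /\ exists X, [/\ p.1 < X, X <= b & m = level a b (X, p.2)]).
Proof.
move=> Hw Hg Hm; have [[Ha Hb Hab HN HE] _] := Hg.
rewrite /DeltaC Hw mem_filter Hm /=.
change (east_starts w) with (esf (0,0) w).
split.
- case/flatten_mapP => p Hp /mapP[y' Hy' ->].
  rewrite mem_iota add0n in Hy'.
  have: exists p0, [/\ p0 \in esf (0,0) w, y' < p0.2 & p.1.+1 = p0.1.+1].
    by exists p; split.
  case/geo => [[q [Hq H1 H2 H3]]|[_ //]].
  exists q; split => //; exists p.1.+1; split => //; first by rewrite -HE.
  by rewrite H1.
- case=> q [Hq [X [H1 H2 ->]]].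
  have: exists p0, [/\ p0 \in nsf (0,0) w, p0.2 = q.2, p0.1 < X & X <= (0,0).1 + count_mem E w].
    by exists q; split => //; rewrite /= HE.
  move=> H; have: exists p, [/\ p \in esf (0,0) w, q.2 < p.2 & X = p.1.+1].
    by apply/geo; left.
  case=> p [Hp Hy ->]; apply/flatten_mapP; exists p => //.
  by apply/mapP; exists q.2; rewrite ?mem_iota.
Qed.

Lemma modinj_aux a b y1 y2 u1 u2 : 0 < a -> coprime a b -> y1 < a -> y2 < a ->
  b * y1 + a * u2 = b * y2 + a * u1 -> y1 = y2.
Proof.
move=> Ha Hab.
wlog Hy : y1 y2 u1 u2 / y2 <= y1.
  move=> Hw H1 H2 Heq; case: (leqP y2 y1) => H; first exact: (Hw _ _ _ _ H H1 H2 Heq).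
  by symmetry; apply: (Hw y2 y1 u2 u1) => //; exact: ltnW.
move=> H1 H2 Heq.
have Hu : u2 <= u1.
  have: b * y2 <= b * y1 by rewrite leq_mul2l Hy orbT.
  move=> H; have: a * u2 <= a * u1 by lia.
  by rewrite leq_mul2l (negbTE (lt0n_neq0 Ha)).
have E1 : b * (y1 - y2) = a * (u1 - u2) by rewrite !mulnBr; lia.
have Hd : a %| y1 - y2 by rewrite -(Gauss_dvdr _ Hab) E1 dvdn_mulr.
case: (posnP (y1 - y2)) => H0; first lia.
have := dvdn_leq H0 Hd; lia.
Qed.

Lemma decomp (D : int) (a : nat) : 0 < a -> (0 <= D)%R ->
  exists T : nat, D = (Posz (T * a) + Posz `|(D %% a)%Z|%N)%R /\ (`|(D %% a)%Z|%N < a).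
Proof.
move=> Ha HD.
have Ha' : (0 < Posz a)%R by rewrite ltz_nat.
have Hr0 : (0 <= (D %% a)%Z)%R by apply: modz_ge0; rewrite eqz_nat -lt0n.
have Hr1 := ltz_pmod D Ha'.
have Ht0 : (0 <= (D %/ a)%Z)%R by rewrite divz_ge0.
exists `|(D %/ a)%Z|%N; split; last by move: Hr1; rewrite -{1}(gez0_abs Hr0) ltz_nat.
rewrite {1}(divz_eq D a) PoszM !gez0_abs //.
Qed.

Lemma f_val (a K k : nat) : k < a ->
  `|((Posz (K * a) + Posz k) %% a)%Z|%N = k.
Proof.
move=> Hk; rewrite PoszM modzMDl modz_small //.
Qed.

Lemma count_Delta a b pi w lp : word a b pi = w -> good a b w ->
  (lp, E) \in PTf (0,0) w ->
  count (fun k : nat => (level a b lp - Posz a + Posz k)%R \in DeltaC a b pi) (iota 0 a)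
  = count (fun p => level a b lp < level a b p)%R (nsf (0,0) w).
Proof.
move=> Hw Hg Hlp; have [[Ha Hb Hab HN HE] Hall] := Hg.
set lam := level a b lp.
have Hlam : (Posz a <= lam)%R by exact: E_lev_ge Hlp.
set f := fun p => `|((level a b p - lam) %% a)%Z|%N.
rewrite -!size_filter.
have HyN : forall q, q \in nsf (0,0) w -> q.2 < a.
  move=> q; rewrite nsf_mem => Hq; have [_ _ _ H _] := PT_bounds Hg Hq; exact: H.
rewrite -(size_map f); apply: perm_size; apply: uniq_perm.
- by rewrite filter_uniq ?iota_uniq.
- rewrite map_inj_in_uniq ?filter_uniq ?uniq_nsf //.
  move=> p1 p2; rewrite !mem_filter => /andP[Q1 P1] /andP[Q2 P2] Hf.
  have D1 : (0 <= level a b p1 - lam)%R by move: Q1; rewrite -subr_gt0 => /ltW.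
  have D2 : (0 <= level a b p2 - lam)%R by move: Q2; rewrite -subr_gt0 => /ltW.
  have [T1 [E1 _]] := decomp Ha D1.
  have [T2 [E2 _]] := decomp Ha D2.
  rewrite -/(f p1) in E1; rewrite -/(f p2) -Hf in E2.
  apply: (nsf_inj P1 P2).
  apply: (modinj_aux (b := b) (u1 := p1.1 + T1) (u2 := p2.1 + T2) Ha Hab (HyN _ P1) (HyN _ P2)).
  move: E1 E2; rewrite /level !mulnDr ![T1 * a]mulnC ![T2 * a]mulnC.
  move: (f p1) (lam) (b * p1.2) (b * p2.2) (a * p1.1) (a * p2.1) (a * T1) (a * T2) => u l x1 x2 x3 x4 x5 x6; lia.
- move=> k; apply/idP/idP.
  + rewrite mem_filter mem_iota add0n => /andP[Hk Hka].
    have Hm : (0 <= lam - Posz a + Posz k)%R by lia.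
    case/(char_DeltaC Hw Hg Hm): Hk => q [Hq [X [H1 H2 Heq]]].
    have Hlev : (level a b q - lam)%R = (Posz ((X - q.1 - 1) * a) + Posz k)%R.
      move: Heq; rewrite /level /=.
      have ->: a * X = a * q.1 + (X - q.1 - 1) * a + a.
        rewrite [in LHS](_ : X = q.1 + (X - q.1 - 1) + 1); last lia.
        by rewrite !mulnDr muln1 [a * (X - _ - _)]mulnC.
      move: (lam) (b * q.2) (a * q.1) ((X - q.1 - 1) * a) => l x1 x2 x3; lia.
    apply/mapP; exists q.
      rewrite mem_filter Hq andbT.
      have Hne : level a b q != lam.
        by apply: (NE_distinct Hg) => //; rewrite -nsf_mem.
      rewrite lt_neqAle eq_sym Hne /= -subr_ge0 Hlev; move: ((X - q.1 - 1) * a) => t; lia.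
    by rewrite /f Hlev f_val.
  + case/mapP => q; rewrite mem_filter => /andP[Qq Hq] ->.
    have Dq : (0 <= level a b q - lam)%R by move: Qq; rewrite -subr_gt0 => /ltW.
    have [T [Eq Hk]] := decomp Ha Dq.
    rewrite -/(f q) in Eq Hk.
    rewrite mem_filter mem_iota add0n Hk andbT.
    have Hyq := HyN q Hq.
    have Hlev : (lam - Posz a + Posz (f q))%R = level a b (q.1 + T + 1, q.2).
      move: Eq; rewrite /level /=.
      have ->: a * (q.1 + T + 1) = a * q.1 + T * a + a.
        by rewrite !mulnDr muln1 [a * T]mulnC.
      move: (lam) (f q) (b * q.2) (a * q.1) (T * a) => l u x1 x2 x3; lia.
    have Hm : (0 <= lam - Posz a + Posz (f q))%R by move: (f q) => u; lia.
    rewrite /= leq0n andbT; apply/(char_DeltaC Hw Hg Hm); exists q; split => //; exists (q.1 + T + 1).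
    split => //; first lia.
    have : (0 <= level a b (q.1 + T + 1, q.2))%R by rewrite -Hlev.
    rewrite /level /= => H0.
    have H3 : a * (q.1 + T + 1) <= b * q.2.
      by move: H0; move: (a * (q.1 + T + 1)) (b * q.2) => x1 x2; lia.
    have H4 : b * q.2 < b * a by rewrite ltn_pmul2l.
    have : a * (q.1 + T + 1) < a * b by rewrite [a * b]mulnC; exact: leq_ltn_trans H3 H4.
    by rewrite ltn_pmul2l //; exact: ltnW.
Qed.

Lemma level00 a b : level a b (0,0) = 0%R.
Proof. by rewrite /level /= !muln0. Qed.

Unset Implicit Arguments.
Theorem mainTheorem9 (a b : nat) :
  0 < a -> 0 < b -> coprime a b ->
  forall pi : seq nat, inD a b pi ->
    is_box_partition a b (G_ba a b pi) /\
    word a b (G_ba a b pi) = sw_plus a b (rev (word a b pi)).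
Proof.
move=> Ha Hb Hab pi /andP[Hbox Hpts].
have [HN HE] := word_counts Hbox.
set w := word a b pi in HN HE Hpts *.
have Hg : good a b w by split.
set PT := PTf (0,0) w.
set V := [seq (q.2, (- level a b q.1)%R) | q <- PT].
have HT : zip w (sl a b 0 w) = [seq (q.2, level a b q.1) | q <- PT].
  by rewrite /PT PT_levels level00.
have Htot : tot a b w = 0%R.
  by rewrite tot_count HN HE mulnC subrr.
set wl := zip (rev w) (word_levels a b (rev w)).
have Hwl : wl = rev V.
  rewrite /wl wl_eq // HT /V -map_comp //.
set M := ((a + b) * size (rev w))%N.
set F := flatten [seq grp wl k | k <- ksM M].
have Hsw : sw_plus a b (rev w) = map fst F.
  by rewrite /F map_flatten -map_comp.
have Huniq : uniq (map snd wl).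
  rewrite Hwl map_rev rev_uniq /V -map_comp.
  rewrite (map_comp (fun x : int => (- x)%R) (fun q => level a b q.1)).
  rewrite map_inj_uniq; last exact: oppr_inj.
  rewrite (map_comp (level a b) fst) map_inj_in_uniq; first exact: uniq_pts.
  exact: level_inj_PT.
have Hbnd : all (fun q : step * int => (- Posz M <= q.2)%R && (q.2 <= 0)%R) wl.
  rewrite Hwl all_rev; apply/allP => q /mapP[p Hp ->] /=.
  have H0 := lev_nonneg Hg Hp.
  have H1 := lev_le Hg Hp.
  have HM : (b * a <= M)%N.
    rewrite /M size_rev size_NE HN HE.
    by rewrite leq_mul // ?leq_addl ?leq_addr.
  rewrite oppr_le0 H0 andbT lerN2.
  by apply: le_trans H1 _; rewrite lez_nat.
have Hperm : perm_eq F wl by apply: F_perm.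
have Hpw : pairwise (fun p q : step * int => (q.2 < p.2)%R) F.
  apply: F_pairwise => //; apply/allP => q /(allP Hbnd) /andP[].
  by [].
have HmemF : forall p, p \in F -> exists lp, p = (lp.2, (- level a b lp.1)%R) /\ lp \in PT.
  move=> p; rewrite (perm_mem Hperm) Hwl mem_rev => /mapP[lp Hlp ->].
  by exists lp.
have Hgen : generators a b pi = [seq (- p.2 - Posz a)%R | p <- F & p.1 == E].
  apply: (sorted_eq (leT := fun x y : int => (x <= y)%R)).
  - by move=> x y z; apply: le_trans.
  - by move=> x y; apply: le_anti.
  - by apply: sort_sorted => x y; apply: le_total.
  - rewrite sorted_pairwise; last by move=> x y z; apply: le_trans.
    rewrite pairwise_map; apply: pairwise_filter.
    apply: sub_pairwise Hpw => p q /= H.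
    by rewrite lerD2r lerN2 ltW.
  rewrite perm_sort.
  have ->: [seq sq_level a b p.1 p.2 | p <- east_starts w]
         = [seq (- p.2 - Posz a)%R | p <- V & p.1 == E].
    change (east_starts w) with (esf (0,0) w).
    rewrite /esf /V filter_map -!map_comp; apply: eq_map => q /=.
    rewrite /sq_level opprK.
    by rewrite (level_move a b (q.1.1, q.1.2) E) /=.
  apply: perm_map; apply: perm_filter.
  by rewrite -(perm_rev V) -Hwl perm_sym.
set s := sw_plus a b (rev w).
have Hu1 : [seq i.1 | i <- wl] = rev w.
  by apply: unzip1_zip; rewrite /word_levels size_scanl.
have HcountN : count_mem N s = a.
  by rewrite /s Hsw count_map (permP Hperm) -count_map Hu1 count_rev.
have HcountE : count_mem E s = b.
  by rewrite /s Hsw count_map (permP Hperm) -count_map Hu1 count_rev.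
have HG : G_ba a b pi = [seq a - x | x <- pc 0 s].
  rewrite /G_ba Hgen /s Hsw pc_list // -!map_comp; apply/eq_in_map => p.
  rewrite mem_filter => /andP[/eqP HpE HpF] /=.
  have [lp [Hp Hlp]] := HmemF p HpF.
  rewrite Hp /= in HpE *; subst p.
  have HlpE : (lp.1, E) \in PT by rewrite -HpE -surjective_pairing.
  rewrite opprK add0n /g_ba count_map.
  rewrite (count_Delta (erefl _) Hg HlpE).
  set lam := level a b lp.1.
  have HF : count (fun q : step * int => (q.1 == N) && (- lam < q.2)%R) F
          = count (fun p => (level a b p < lam)%R) (nsf (0,0) w).
    rewrite (permP Hperm) Hwl count_rev /V count_map /nsf count_map count_filter.
    by apply: eq_count => q /=; rewrite ltrN2 andbC.
  rewrite HF.
  have Hsz := size_nsf w; rewrite HN in Hsz.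
  have Hc := count_predC (fun p => (level a b p < lam)%R) (nsf (0,0) w).
  rewrite Hsz in Hc.
  suff -> : count (fun p => (lam < level a b p)%R) (nsf (0, 0) w)
       = count (predC (fun p => (level a b p < lam)%R)) (nsf (0,0) w) by lia.
  apply: eq_in_count => q Hq /=.
  have Hne : level a b q != lam.
    by apply: (NE_distinct Hg) => //; rewrite -nsf_mem.
  by rewrite lt_neqAle eq_sym Hne /= leNgt.
rewrite HG; split; first exact: cols_box.
exact: word_cols.
Qed.
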